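(* Let $G$ and $G'$ act on simply connected scwols $\mathcal X$ and $\mathcal X'$ with quotients $\mathcal Y=G\backslash\mathcal X$ and $\mathcal Y'=G'\backslash\mathcal X'$, let $L:\mathcal X\to\mathcal X'$ be a morphism of scwols equivariant with respect to a homomorphism $\Lambda:G\to G'$, with induced morphism $l:\mathcal Y\to\mathcal Y'$, and let $\lambda=\lambda_{C_\bullet,C'_\bullet,N_\bullet}:G(\mathcal Y)_{C_\bullet}\to G'(\mathcal Y')_{C'_\bullet}$ be the induced morphism for some choices $C_\bullet$, $C'_\bullet$, $N_\bullet$. Then $\lambda$ is a covering of complexes of groups if and only if $\Lambda$ is injective and $L$ is an isomorphism of scwols.
   Context: Scwols. A scwol $\mathcal X$ consists of a set $V(\mathcal X)$ of vertices, a set $E(\mathcal X)$ of edges, maps $i,t:E(\mathcal X)\to V(\mathcal X)$, and a composition $(a,b)\mapsto ab\in E(\mathcal X)$ defined on $E^{(2)}(\mathcal X)=\{(a,b): i(a)=t(b)\}$, such that $i(ab)=i(b)$, $t(ab)=t(a)$, $(ab)c=a(bc)$ whenever defined, and $i(a)\neq t(a)$ for all $a$. $\mathcal X$ is connected (resp. simply connected) if its geometric realization (one $k$-simplex for each sequence of $k$ composable edges) is. A morphism of scwols $l$ sends vertices to vertices and edges to edges and commutes with $i$, $t$ and composition; it is nondegenerate if for every vertex $\sigma$ it maps the edges with initial vertex $\sigma$ bijectively onto the edges with initial vertex $l(\sigma)$; an isomorphism is an invertible morphism. An action of a group $G$ on $\mathcal X$ is a homomorphism from $G$ to the automorphism group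 of $\mathcal X$ such that $g\cdot i(a)\neq t(a)$ for all $g,a$, and $g\cdot i(a)=i(a)$ implies $g\cdot a=a$. The quotient scwol $G\backslash\mathcal X$ has as vertices and edges the $G$-orbits with induced structure; a $\Lambda$-equivariant morphism $L$ ($L(g\alpha)=\Lambda(g)L(\alpha)$) induces a morphism $l$ of quotients. Complexes of groups. A complex of groups $G(\mathcal Y)=(G_\sigma,\psi_a,g_{a,b})$ over $\mathcal Y$ consists of groups $G_\sigma$, injective homomorphisms $\psi_a:G_{i(a)}\to G_{t(a)}$ and elements $g_{a,b}\in G_{t(a)}$ with $\mathrm{Ad}(g_{a,b})\psi_{ab}=\psi_a\psi_b$ and $\psi_a(g_{b,c})g_{a,bc}=g_{a,b}g_{ab,c}$. A morphism $\phi=(\phi_\sigma,\phi(a)):G(\mathcal Y)\to G'(\mathcal Y')$ over $l$ consists of homomorphisms $\phi_\sigma:G_\sigma\to G'_{l(\sigma)}$ and elements $\phi(a)\in G'_{t(l(a))}$ with $\mathrm{Ad}(\phi(a))\psi'_{l(a)}\phi_{i(a)}=\phi_{t(a)}\psi_a$ and $\phi_{t(a)}(g_{a,b})\phi(ab)=\phi(a)\psi'_{l(a)}(\phi(b))g'_{l(a),l(b)}$. A morphism $\phi$ over a nondegenerate $l$ with $\mathcal Y'$ connected is a covering if every $\phi_\sigma$ is injective and for every $a'\in E(\mathcal Y')$ and $\sigma\in V(\mathcal Y)$ with $t(a')=l(\sigma)$ the map $\coprod_{a\in l^{-1}(a'),\,t(a)=\sigma}G_\sigma/\psi_a(G_{i(a)})\to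 G'_{l(\sigma)}/\psi'_{a'}(G'_{i(a')})$ induced by $g\mapsto\phi_\sigma(g)\phi(a)$ is bijective. Associated complex of groups and induced morphism. If $G$ acts on $\mathcal X$ with quotient $\mathcal Y$, a choice $C_\bullet$ consists of a lift $\bar\sigma\in V(\mathcal X)$ of each $\sigma\in V(\mathcal Y)$ and, for each $a\in E(\mathcal Y)$, with $\bar a$ the unique lift of $a$ with $i(\bar a)=\overline{i(a)}$, an element $h_a\in G$ with $h_a\cdot t(\bar a)=\overline{t(a)}$. Then $G(\mathcal Y)_{C_\bullet}$ has $G_\sigma=\mathrm{Stab}_G(\bar\sigma)$, $\psi_a(g)=h_agh_a^{-1}$, $g_{a,b}=h_ah_bh_{ab}^{-1}$. Similarly $C'_\bullet=(\overline{\sigma'},h'_{a'})$ for $G'$ on $\mathcal X'$. A choice $N_\bullet=(k_\sigma)_{\sigma\in V(\mathcal Y)}$ consists of $k_\sigma\in G'$ with $k_\sigma\cdot L(\bar\sigma)=\overline{l(\sigma)}$; the induced morphism $\lambda_{C_\bullet,C'_\bullet,N_\bullet}$ over $l$ is $\lambda_\sigma(g)=k_\sigma\Lambda(g)k_\sigma^{-1}$, $\lambda(a)=k_{t(a)}\Lambda(h_a)k_{i(a)}^{-1}h'^{-1}_{l(a)}$. *)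

(* Defs.v *)
From Stdlib Require Import List Relations.
Import ListNotations.
Set Implicit Arguments.

Record Grp := {
  gcar :> Type;
  gmul : gcar -> gcar -> gcar;
  gone : gcar;
  ginv : gcar -> gcar;
  gmulA : forall x y z, gmul x (gmul y z) = gmul (gmul x y) z;
  gmul1 : forall x, gmul gone x = x;
  gmulr1 : forall x, gmul x gone = x;
  gmulV : forall x, gmul (ginv x) x = gone;
  gmulrV : forall x, gmul x (ginv x) = gone
}.
Arguments gmul {g}.
Arguments gone {g}.
Arguments ginv {g}.

Definition group_hom {G G' : Grp} (f : G -> G') : Prop :=
  forall x y, f (gmul x y) = gmul (f x) (f y).

Definition injective_map {A B : Type} (f : A -> B) : Prop :=
  forall x y, f x = f y -> x = y.

(** * Scwols.  Composition is given as a total function [comp] whose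
    values are only meaningful on composable pairs (i a = t b). *)
Record scwol := {
  sV : Type;
  sE : Type;
  si : sE -> sV;
  st : sE -> sV;
  comp : sE -> sE -> sE;
  comp_i : forall a b, si a = st b -> si (comp a b) = si b;
  comp_t : forall a b, si a = st b -> st (comp a b) = st a;
  comp_assoc : forall a b c, si a = st b -> si b = st c ->
      comp (comp a b) c = comp a (comp b c);
  no_loop : forall a, si a <> st a
}.

Definition is_morphism {X X' : scwol} (fV : sV X -> sV X') (fE : sE X -> sE X')
  : Prop :=
  (forall a, si X' (fE a) = fV (si X a)) /\
  (forall a, st X' (fE a) = fV (st X a)) /\
  (forall a b, si X a = st X b -> fE (comp X a b) = comp X' (fE a) (fE b)).

Definition nondegenerate {X X' : scwol} (fV : sV X -> sV X') (fE : sE X -> sE X')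
  : Prop :=
  forall s : sV X,
    (forall a b, si X a = s -> si X b = s -> fE a = fE b -> a = b) /\
    (forall a', si X' a' = fV s -> exists a, si X a = s /\ fE a = a').

Definition is_isomorphism {X X' : scwol} (fV : sV X -> sV X') (fE : sE X -> sE X')
  : Prop :=
  is_morphism fV fE /\
  exists (gV : sV X' -> sV X) (gE : sE X' -> sE X),
    is_morphism gV gE /\
    (forall v, gV (fV v) = v) /\ (forall v', fV (gV v') = v') /\
    (forall a, gE (fE a) = a) /\ (forall a', fE (gE a') = a').

(** * Connectedness and simple connectedness (combinatorial, via edge paths
      of the geometric realization). *)

Definition step_src (X : scwol) (s : sE X * bool) : sV X :=
  if snd s then si X (fst s) else st X (fst s).
Definition step_tgt (X : scwol) (s : sE X * bool) : sV X :=
  if snd s then st X (fst s) else si X (fst s).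

Fixpoint edge_path (X : scwol) (v w : sV X) (p : list (sE X * bool)) : Prop :=
  match p with
  | [] => v = w
  | s :: q => step_src X s = v /\ edge_path X (step_tgt X s) w q
  end.

(* elementary homotopies: cancelling a backtrack, and replacing two
   composable edges (b then a, i a = t b) by their composite ab
   (i.e. moving across a 2-simplex of the realization) *)
Inductive elem_htpy (X : scwol) : list (sE X * bool) -> list (sE X * bool) -> Prop :=
  | eh_back : forall p q a d,
      elem_htpy X (p ++ (a, d) :: (a, negb d) :: q) (p ++ q)
  | eh_comp : forall p q a b, si X a = st X b ->
      elem_htpy X (p ++ (b, true) :: (a, true) :: q) (p ++ (comp X a b, true) :: q).

Definition path_htpy (X : scwol) (v w : sV X) : relation (list (sE X * bool)) :=
  clos_refl_sym_trans _
    (fun p q => edge_path X v w p /\ edge_path X v w q /\ elem_htpy X p q).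

Definition connected (X : scwol) : Prop :=
  inhabited (sV X) /\ forall v w : sV X, exists p, edge_path X v w p.

Definition simply_connected (X : scwol) : Prop :=
  connected X /\
  forall (v : sV X) p, edge_path X v v p -> path_htpy X v v p [].

Record action (G : Grp) (X : scwol) := {
  actV : G -> sV X -> sV X;
  actE : G -> sE X -> sE X;
  actV1 : forall v, actV gone v = v;
  actE1 : forall a, actE gone a = a;
  actVM : forall g h v, actV (gmul g h) v = actV g (actV h v);
  actEM : forall g h a, actE (gmul g h) a = actE g (actE h a);
  act_morph : forall g, is_morphism (actV g) (actE g);
  act_no_inv : forall g a, actV g (si X a) <> st X a;
  act_stab : forall g a, actV g (si X a) = si X a -> actE g a = a
}.
Arguments actV {G X}.
Arguments actE {G X}.

(** This determines i, t and composition of Y. *)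
Definition is_quotient {G : Grp} {X : scwol} (A : action G X) {Y : scwol}
  (pV : sV X -> sV Y) (pE : sE X -> sE Y) : Prop :=
  is_morphism pV pE /\
  (forall y, exists x, pV x = y) /\ (forall e, exists a, pE a = e) /\
  (forall x x', pV x = pV x' <-> exists g, actV A g x = x') /\
  (forall a a', pE a = pE a' <-> exists g, actE A g a = a').

(** * Choices and the associated complex of groups G(Y)_C.
    All local groups of G(Y)_C are subgroups of G, so G(Y)_C is represented
    inside the ambient group G. *)
Record choiceC (G : Grp) (X : scwol) (A : action G X) (Y : scwol)
  (pV : sV X -> sV Y) (pE : sE X -> sE Y) := {
  cbarV : sV Y -> sV X;
  cbarE : sE Y -> sE X;
  ch : sE Y -> G;
  cbarV_lift : forall s, pV (cbarV s) = s;
  cbarE_lift : forall a, pE (cbarE a) = a;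
  cbarE_i : forall a, si X (cbarE a) = cbarV (si Y a);
  ch_t : forall a, actV A (ch a) (st X (cbarE a)) = cbarV (st Y a)
}.
Arguments choiceC {G X} A {Y} pV pE.
Arguments cbarV {G X A Y pV pE}.
Arguments cbarE {G X A Y pV pE}.
Arguments ch {G X A Y pV pE}.

Definition locC {G X A Y pV pE} (C : @choiceC G X A Y pV pE) (s : sV Y) (g : G) : Prop :=
  actV A g (cbarV C s) = cbarV C s.

Definition psiC {G X A Y pV pE} (C : @choiceC G X A Y pV pE) (a : sE Y) (g : G) : G :=
  gmul (gmul (ch C a) g) (ginv (ch C a)).

Definition choiceN {G X A Y pV pE} (C : @choiceC G X A Y pV pE)
  {G' X'} {A' : action G' X'} {Y' pV' pE'} (C' : @choiceC G' X' A' Y' pV' pE')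
  (LV : sV X -> sV X') (lV : sV Y -> sV Y') (k : sV Y -> G') : Prop :=
  forall s, actV A' (k s) (LV (cbarV C s)) = cbarV C' (lV s).

Definition lambdaV {G G' : Grp} (Lam : G -> G') {Y : scwol} (k : sV Y -> G') (s : sV Y) (g : G)
  : G' := gmul (gmul (k s) (Lam g)) (ginv (k s)).

Definition lambdaE {G X A Y pV pE} (C : @choiceC G X A Y pV pE)
  {G' X'} {A' : action G' X'} {Y' pV' pE'} (C' : @choiceC G' X' A' Y' pV' pE')
  (Lam : G -> G') (lE : sE Y -> sE Y') (k : sV Y -> G') (a : sE Y) : G' :=
  gmul (gmul (gmul (k (st Y a)) (Lam (ch C a))) (ginv (k (si Y a))))
       (ginv (ch C' (lE a))).

(** * Coverings of complexes of groups, for complexes whose local groups are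
    given as subgroups [loc sigma] of ambient groups G, G' (with twisting
    maps psi, psi'), and a morphism (phiV, phiE) over l = (lV, lE).
    Cosets are left cosets g psi_a(G_{i(a)}); two cosets x H, y H coincide
    iff x h = y for some h in H. *)
Definition is_covering {Y Y' : scwol} (lV : sV Y -> sV Y') (lE : sE Y -> sE Y')
  {G G' : Grp}
  (loc : sV Y -> G -> Prop) (psi : sE Y -> G -> G)
  (loc' : sV Y' -> G' -> Prop) (psi' : sE Y' -> G' -> G')
  (phiV : sV Y -> G -> G') (phiE : sE Y -> G') : Prop :=
  nondegenerate lV lE /\ connected Y' /\
  (forall s g1 g2, loc s g1 -> loc s g2 -> phiV s g1 = phiV s g2 -> g1 = g2) /\
  (forall (a' : sE Y') (s : sV Y), st Y' a' = lV s ->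
    (* injectivity of  coprod_{a in l^-1(a'), t(a)=s} G_s/psi_a(G_{i a})
         -> G'_{l s}/psi'_{a'}(G'_{i a'}),  [g] |-> [phi_s(g) phi(a)] *)
    (forall a1 a2 g1 g2,
        lE a1 = a' -> lE a2 = a' -> st Y a1 = s -> st Y a2 = s ->
        loc s g1 -> loc s g2 ->
        (exists h', loc' (si Y' a') h' /\
           gmul (gmul (phiV s g1) (phiE a1)) (psi' a' h')
           = gmul (phiV s g2) (phiE a2)) ->
        a1 = a2 /\ exists h, loc (si Y a1) h /\ gmul g1 (psi a1 h) = g2) /\
    (forall g', loc' (lV s) g' ->
        exists a g h', lE a = a' /\ st Y a = s /\ loc s g /\ loc' (si Y' a') h' /\
          gmul (gmul (phiV s g) (phiE a)) (psi' a' h') = g')).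

(* Main.v *)
Require Import Defs.
From Stdlib Require Import List Relations ClassicalEpsilon.
Import ListNotations.
Set Implicit Arguments.

Definition mapP {X X' : scwol} (fE : sE X -> sE X') (p : list (sE X * bool)) :=
  map (fun s => (fE (fst s), snd s)) p.

Lemma step_src_map {X X' : scwol} (fV : sV X -> sV X') (fE : sE X -> sE X')
  (h : is_morphism fV fE) (s : sE X * bool) :
  step_src X' (fE (fst s), snd s) = fV (step_src X s) /\
  step_tgt X' (fE (fst s), snd s) = fV (step_tgt X s).
Proof.
  destruct h as [h1 [h2 _]]. destruct s as [a [|]]; unfold step_src, step_tgt; simpl; rewrite ?h1, ?h2; auto.
Qed.

Lemma map_path {X X' : scwol} (fV : sV X -> sV X') (fE : sE X -> sE X')
  (h : is_morphism fV fE) : forall p v w,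
  edge_path X v w p -> edge_path X' (fV v) (fV w) (mapP fE p).
Proof.
  induction p as [|s q IH]; simpl; intros v w H.
  - subst; reflexivity.
  - destruct H as [H1 H2]. destruct (step_src_map h s) as [E1 E2].
    split. rewrite E1, H1; reflexivity. rewrite E2. apply IH; exact H2.
Qed.

Lemma edge_path_app (X : scwol) : forall p q v w,
  edge_path X v w (p ++ q) <-> exists u, edge_path X v u p /\ edge_path X u w q.
Proof.
  induction p as [|s p IH]; simpl; intros q v w.
  - split. intro H; exists v; auto. intros [u [-> H]]; exact H.
  - split.
    + intros [H1 H2]. apply IH in H2. destruct H2 as [u [H3 H4]]. exists u; auto.
    + intros [u [[H1 H3] H4]]. split; auto. apply IH. exists u; auto.
Qed.

Lemma edge_path_det (X : scwol) : forall p v w1 w2,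
  edge_path X v w1 p -> edge_path X v w2 p -> w1 = w2.
Proof.
  induction p as [|s p IH]; simpl; intros v w1 w2 H1 H2.
  - congruence.
  - destruct H1, H2; eauto.
Qed.

Definition in_nondeg {X X' : scwol} (fV : sV X -> sV X') (fE : sE X -> sE X')
  : Prop :=
  forall s : sV X,
    (forall a b, st X a = s -> st X b = s -> fE a = fE b -> a = b) /\
    (forall a', st X' a' = fV s -> exists a, st X a = s /\ fE a = a').

Lemma step_lift {X X' : scwol} (fV : sV X -> sV X') (fE : sE X -> sE X')
  (h : is_morphism fV fE) (ho : nondegenerate fV fE) (hi : in_nondeg fV fE)
  (a' : sE X') (d : bool) (u : sV X) :
  step_src X' (a', d) = fV u -> exists a, step_src X (a, d) = u /\ fE a = a'.
Proof.
  destruct d; simpl; intro H.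
  - destruct (proj2 (ho u) a' H) as [a [H1 H2]]. exists a; auto.
  - destruct (proj2 (hi u) a' H) as [a [H1 H2]]. exists a; auto.
Qed.

Lemma step_inj {X X' : scwol} (fV : sV X -> sV X') (fE : sE X -> sE X')
  (ho : nondegenerate fV fE) (hi : in_nondeg fV fE)
  (a b : sE X) (d : bool) :
  step_src X (a, d) = step_src X (b, d) -> fE a = fE b -> a = b.
Proof.
  destruct d; simpl; intros H1 H2.
  - apply (proj1 (ho (si X a)) a b); auto.
  - apply (proj1 (hi (st X a)) a b); auto.
Qed.

Lemma lift_exists {X X' : scwol} (fV : sV X -> sV X') (fE : sE X -> sE X')
  (h : is_morphism fV fE) (ho : nondegenerate fV fE) (hi : in_nondeg fV fE) :
  forall p' v w', edge_path X' (fV v) w' p' ->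
  exists p w, edge_path X v w p /\ mapP fE p = p' /\ fV w = w'.
Proof.
  induction p' as [|[a' d] q IH]; simpl; intros v w' H.
  - exists [], v; simpl; auto.
  - destruct H as [H1 H2].
    destruct (step_lift h ho hi a' d v H1) as [a [E1 E2]].
    destruct (step_src_map h (a, d)) as [_ E3]. simpl in E3. rewrite E2 in E3.
    rewrite E3 in H2. destruct (IH _ _ H2) as [p [w [P1 [P2 P3]]]].
    exists ((a, d) :: p), w. simpl. rewrite E2, P2. auto.
Qed.

Definition LiftEnd {X X' : scwol} (fE : sE X -> sE X') (v : sV X)
  (p' : list (sE X' * bool)) (w : sV X) : Prop :=
  exists p, edge_path X v w p /\ mapP fE p = p'.

Lemma lift_unique {X X' : scwol} (fV : sV X -> sV X') (fE : sE X -> sE X')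
  (ho : nondegenerate fV fE) (hi : in_nondeg fV fE) :
  forall p q v w1 w2, edge_path X v w1 p -> edge_path X v w2 q ->
  mapP fE p = mapP fE q -> w1 = w2.
Proof.
  induction p as [|[a d] p IH]; destruct q as [|[b e] q]; simpl; intros v w1 w2 H1 H2 E;
    try discriminate.
  - congruence.
  - injection E as E1 E2 E3. subst e. destruct H1 as [H1 H1'], H2 as [H2 H2'].
    assert (a = b). { apply (step_inj ho hi a b d); congruence. }
    subst b. eauto.
Qed.

Lemma mapP_app {X X' : scwol} (fE : sE X -> sE X') p q :
  mapP fE (p ++ q) = mapP fE p ++ mapP fE q.
Proof. unfold mapP; apply map_app. Qed.

Lemma mapP_split {X X' : scwol} {fE : sE X -> sE X'} {p P Q} :
  mapP fE p = P ++ Q -> exists P1 Q1, p = P1 ++ Q1 /\ mapP fE P1 = P /\ mapP fE Q1 = Q.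
Proof. apply map_eq_app. Qed.

Lemma mapP_cons {X X' : scwol} {fE : sE X -> sE X'} {p a' d Q} :
  mapP fE p = (a', d) :: Q -> exists a Q1, p = (a, d) :: Q1 /\ fE a = a' /\ mapP fE Q1 = Q.
Proof.
  intro H. destruct (map_eq_cons _ _ H) as [[a e] [tl [H1 [H2 H3]]]].
  simpl in H2. injection H2 as E1 E2. subst. exists a, tl. auto.
Qed.

Lemma htpy_fwd {X X' : scwol} (fV : sV X -> sV X') (fE : sE X -> sE X')
  (h : is_morphism fV fE) (ho : nondegenerate fV fE) (hi : in_nondeg fV fE) :
  forall p' q' v w, elem_htpy X' p' q' ->
  LiftEnd fE v p' w -> LiftEnd fE v q' w.
Proof.
  intros p' q' v w He [p [Hp Hm]].
  destruct He as [P Q a d | P Q a b Hab].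
  - destruct (mapP_split Hm) as [P1 [R [-> [HP HR]]]].
    destruct (mapP_cons HR) as [a1 [R1 [-> [Ha1 HR1]]]].
    destruct (mapP_cons HR1) as [a2 [Q1 [-> [Ha2 HQ1]]]].
    apply edge_path_app in Hp. destruct Hp as [u [Hu1 Hu2]].
    simpl in Hu2. destruct Hu2 as [S1 [S2 S3]].
    exists (P1 ++ Q1). rewrite mapP_app, HP, HQ1. split; auto.
    apply edge_path_app. exists u. split; auto.
    assert (a2 = a1).
    { apply (step_inj ho hi a2 a1 (negb d)). 2: congruence.
      rewrite S2. destruct d; reflexivity. }
    subst a2. destruct d; simpl in *; unfold step_src, step_tgt in *; simpl in *; congruence.
  - destruct (mapP_split Hm) as [P1 [R [-> [HP HR]]]].
    destruct (mapP_cons HR) as [b1 [R1 [-> [Hb1 HR1]]]].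
    destruct (mapP_cons HR1) as [a1 [Q1 [-> [Ha1 HQ1]]]].
    apply edge_path_app in Hp. destruct Hp as [u [Hu1 Hu2]].
    simpl in Hu2. unfold step_src, step_tgt in Hu2; simpl in Hu2.
    destruct Hu2 as [S1 [S2 S3]].
    exists (P1 ++ (comp X a1 b1, true) :: Q1).
    rewrite mapP_app, HP. simpl. rewrite HQ1.
    destruct h as [_ [_ h3]]. rewrite h3 by auto. rewrite Ha1, Hb1.
    split; auto.
    apply edge_path_app. exists u. split; auto. simpl.
    unfold step_src, step_tgt; simpl.
    rewrite comp_i, comp_t by auto. auto.
Qed.

Lemma htpy_bwd {X X' : scwol} (fV : sV X -> sV X') (fE : sE X -> sE X')
  (h : is_morphism fV fE) (ho : nondegenerate fV fE) (hi : in_nondeg fV fE) :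
  forall p' q' v w w', elem_htpy X' p' q' -> edge_path X' (fV v) w' p' ->
  LiftEnd fE v q' w -> LiftEnd fE v p' w.
Proof.
  intros p' q' v w w' He Hp' [p [Hp Hm]].
  destruct He as [P Q a d | P Q a b Hab].
  - destruct (mapP_split Hm) as [P1 [Q1 [-> [HP HQ]]]].
    apply edge_path_app in Hp. destruct Hp as [u [Hu1 Hu2]].
    apply edge_path_app in Hp'. destruct Hp' as [u' [Hu1' Hu2']].
    assert (u' = fV u).
    { apply (edge_path_det X' P (fV v)); auto. rewrite <- HP. apply (map_path h); auto. }
    subst u'. destruct Hu2' as [S1 _].
    destruct (step_lift h ho hi a d u S1) as [a1 [T1 T2]].
    exists (P1 ++ (a1, d) :: (a1, negb d) :: Q1).
    rewrite mapP_app, HP. simpl. rewrite T2, HQ. split; auto.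
    apply edge_path_app. exists u. split; auto.
    destruct d; simpl in *; unfold step_src, step_tgt in *; simpl in *; subst; auto.
  - destruct (mapP_split Hm) as [P1 [R [-> [HP HR]]]].
    destruct (mapP_cons HR) as [c1 [Q1 [-> [Hc1 HQ1]]]].
    apply edge_path_app in Hp. destruct Hp as [u [Hu1 Hu2]].
    apply edge_path_app in Hp'. destruct Hp' as [u' [Hu1' Hu2']].
    assert (u' = fV u).
    { apply (edge_path_det X' P (fV v)); auto. rewrite <- HP. apply (map_path h); auto. }
    subst u'. simpl in Hu2'. unfold step_src, step_tgt in Hu2'; simpl in Hu2'.
    destruct Hu2' as [S1 _].
    simpl in Hu2. unfold step_src, step_tgt in Hu2; simpl in Hu2.
    destruct Hu2 as [T1 T2].
    destruct (proj2 (ho u) b S1) as [b1 [B1 B2]].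
    assert (Ha : si X' a = fV (st X b1)).
    { rewrite Hab, <- B2. apply (proj1 (proj2 h)). }
    destruct (proj2 (ho (st X b1)) a Ha) as [a1 [A1 A2]].
    assert (c1 = comp X a1 b1).
    { apply (proj1 (ho u)); auto.
      rewrite comp_i; auto.
      rewrite (proj2 (proj2 h)) by auto. congruence. }
    subst c1.
    exists (P1 ++ (b1, true) :: (a1, true) :: Q1).
    rewrite mapP_app, HP. simpl. rewrite A2, B2, HQ1. split; auto.
    apply edge_path_app. exists u. split; auto. simpl.
    unfold step_src, step_tgt; simpl.
    rewrite comp_t in T2 by auto. auto.
Qed.

Lemma htpy_inv {X X' : scwol} (fV : sV X -> sV X') (fE : sE X -> sE X')
  (h : is_morphism fV fE) (ho : nondegenerate fV fE) (hi : in_nondeg fV fE)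
  (v' w' : sV X') : forall p q, path_htpy X' v' w' p q ->
  forall v, fV v = v' -> forall w, LiftEnd fE v p w <-> LiftEnd fE v q w.
Proof.
  intros p q H. induction H as [p q [H1 [H2 H3]] | p | p q _ IH | p q r _ IH1 _ IH2];
    intros v Ev w.
  - split. apply (htpy_fwd h ho hi); auto.
    subst v'. apply (htpy_bwd h ho hi) with (q' := q) (w' := w'); auto.
  - tauto.
  - symmetry; auto.
  - rewrite IH1, IH2 by auto. tauto.
Qed.

Lemma cover_iso {X X' : scwol} (fV : sV X -> sV X') (fE : sE X -> sE X')
  (h : is_morphism fV fE) (ho : nondegenerate fV fE) (hi : in_nondeg fV fE)
  (hX : connected X) (hX' : simply_connected X') : is_isomorphism fV fE.
Proof.
  destruct hX as [[v0] hX]. destruct hX' as [[_ hc'] hs'].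
  assert (injV : forall v1 v2, fV v1 = fV v2 -> v1 = v2).
  { intros v1 v2 E. destruct (hX v1 v2) as [p Hp].
    assert (Hl : edge_path X' (fV v1) (fV v1) (mapP fE p)).
    { rewrite E at 2. apply (map_path h); auto. }
    pose proof (hs' _ _ Hl) as Hh.
    assert (LiftEnd fE v1 [] v2).
    { apply (htpy_inv h ho hi Hh v1 eq_refl v2). exists p; auto. }
    destruct H as [q [Hq Hm]]. destruct q; [simpl in Hq; auto | discriminate]. }
  assert (surV : forall v', exists v, fV v = v').
  { intro v'. destruct (hc' (fV v0) v') as [p' Hp'].
    destruct (lift_exists h ho hi p' v0 v' Hp') as [p [w [_ [_ Hw]]]]. eauto. }
  assert (injE : forall a b, fE a = fE b -> a = b).
  { intros a b E. apply (proj1 (ho (si X a))); auto. apply injV.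
    rewrite <- !(proj1 h). congruence. }
  assert (surE : forall a', exists a, fE a = a').
  { intro a'. destruct (surV (si X' a')) as [v Hv].
    destruct (proj2 (ho v) a' (eq_sym Hv)) as [a [_ Ha]]. eauto. }
  set (gV := fun v' => proj1_sig (constructive_indefinite_description _ (surV v'))).
  set (gE := fun a' => proj1_sig (constructive_indefinite_description _ (surE a'))).
  assert (gV1 : forall v', fV (gV v') = v').
  { intro v'. unfold gV. destruct constructive_indefinite_description; auto. }
  assert (gE1 : forall a', fE (gE a') = a').
  { intro a'. unfold gE. destruct constructive_indefinite_description; auto. }
  split; auto. exists gV, gE.
  destruct h as [h1 [h2 h3]].
  refine (conj _ (conj _ (conj _ (conj _ _)))).
  - split; [|split].
    + intro a'. apply injV. rewrite <- h1, !gE1, gV1. reflexivity.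
    + intro a'. apply injV. rewrite <- h2, !gE1, gV1. reflexivity.
    + intros a' b' E. apply injE. rewrite h3. rewrite !gE1. reflexivity.
      apply injV. rewrite <- h1, <- h2, gE1, gE1. exact E.
  - intro v. apply injV. rewrite gV1. reflexivity.
  - exact gV1.
  - intro a. apply injE. rewrite gE1. reflexivity.
  - exact gE1.
Qed.

Lemma mulKg {G : Grp} (x y : G) : gmul (ginv x) (gmul x y) = y.
Proof. rewrite gmulA, gmulV, gmul1; reflexivity. Qed.
Lemma mulVKg {G : Grp} (x y : G) : gmul x (gmul (ginv x) y) = y.
Proof. rewrite gmulA, gmulrV, gmul1; reflexivity. Qed.
Lemma mul_cancel_l {G : Grp} (x y z : G) : gmul x y = gmul x z -> y = z.
Proof. intro H. rewrite <- (mulKg x y), <- (mulKg x z), H; reflexivity. Qed.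
Lemma ginv_unique {G : Grp} (x y : G) : gmul x y = gone -> ginv x = y.
Proof. intro H. apply (mul_cancel_l x). rewrite gmulrV; auto. Qed.
Lemma ginv_mul {G : Grp} (x y : G) : ginv (gmul x y) = gmul (ginv y) (ginv x).
Proof. apply ginv_unique. rewrite <- gmulA, mulVKg, gmulrV; reflexivity. Qed.
Lemma ginv_ginv {G : Grp} (x : G) : ginv (ginv x) = x.
Proof. apply ginv_unique. apply gmulV. Qed.
Lemma ginv_one {G : Grp} : ginv (@gone G) = gone.
Proof. apply ginv_unique. apply gmul1. Qed.

Ltac gnorm := repeat progress (rewrite ?ginv_mul, ?ginv_ginv, ?ginv_one, <- ?gmulA,
  ?mulKg, ?mulVKg, ?gmulV, ?gmulrV, ?gmul1, ?gmulr1).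

Lemma hom_one {G G' : Grp} (f : G -> G') (hf : group_hom f) : f gone = gone.
Proof.
  apply (mul_cancel_l (f gone)). rewrite <- hf, gmul1, gmulr1; reflexivity.
Qed.
Lemma hom_inv {G G' : Grp} (f : G -> G') (hf : group_hom f) x : f (ginv x) = ginv (f x).
Proof. symmetry. apply ginv_unique. rewrite <- hf, gmulrV. apply hom_one; auto. Qed.



Lemma act_si {G X} (A : action G X) g a : si X (actE A g a) = actV A g (si X a).
Proof. apply (proj1 (act_morph A g)). Qed.
Lemma act_st {G X} (A : action G X) g a : st X (actE A g a) = actV A g (st X a).
Proof. apply (proj1 (proj2 (act_morph A g))). Qed.
Lemma actV_K {G X} (A : action G X) g v : actV A (ginv g) (actV A g v) = v.
Proof. rewrite <- actVM, gmulV, actV1; reflexivity. Qed.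
Lemma actV_VK {G X} (A : action G X) g v : actV A g (actV A (ginv g) v) = v.
Proof. rewrite <- actVM, gmulrV, actV1; reflexivity. Qed.
Lemma actE_K {G X} (A : action G X) g a : actE A (ginv g) (actE A g a) = a.
Proof. rewrite <- actEM, gmulV, actE1; reflexivity. Qed.
Lemma actE_VK {G X} (A : action G X) g a : actE A g (actE A (ginv g) a) = a.
Proof. rewrite <- actEM, gmulrV, actE1; reflexivity. Qed.
Lemma actV_inj {G X} (A : action G X) g v w : actV A g v = actV A g w -> v = w.
Proof. intro H. rewrite <- (actV_K A g v), H, actV_K; reflexivity. Qed.
Lemma actE_inj {G X} (A : action G X) g a b : actE A g a = actE A g b -> a = b.
Proof. intro H. rewrite <- (actE_K A g a), H, actE_K; reflexivity. Qed.
Lemma orbit_si {G X} (A : action G X) g a b :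
  actE A g a = b -> si X a = si X b -> a = b.
Proof.
  intros H1 H2. subst b. rewrite act_si in H2.
  symmetry. apply act_stab. auto.
Qed.

Lemma quot_E {G X} (A : action G X) {Y} pV pE (hY : @is_quotient G X A Y pV pE) g a :
  pE (actE A g a) = pE a.
Proof. destruct hY as [_ [_ [_ [_ H]]]]. symmetry. apply H. eauto. Qed.
Lemma quot_V {G X} (A : action G X) {Y} pV pE (hY : @is_quotient G X A Y pV pE) g v :
  pV (actV A g v) = pV v.
Proof. destruct hY as [_ [_ [_ [H _]]]]. symmetry. apply H. eauto. Qed.
Lemma quot_E_orb {G X} (A : action G X) {Y} pV pE (hY : @is_quotient G X A Y pV pE) a b :
  pE a = pE b -> exists g, actE A g a = b.
Proof. destruct hY as [_ [_ [_ [_ H]]]]. apply H. Qed.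
Lemma quot_V_orb {G X} (A : action G X) {Y} pV pE (hY : @is_quotient G X A Y pV pE) a b :
  pV a = pV b -> exists g, actV A g a = b.
Proof. destruct hY as [_ [_ [_ [H _]]]]. apply H. Qed.
Lemma quot_si {G X} (A : action G X) {Y} pV pE (hY : @is_quotient G X A Y pV pE) a :
  si Y (pE a) = pV (si X a).
Proof. apply (proj1 (proj1 hY)). Qed.
Lemma quot_st {G X} (A : action G X) {Y} pV pE (hY : @is_quotient G X A Y pV pE) a :
  st Y (pE a) = pV (st X a).
Proof. apply (proj1 (proj2 (proj1 hY))). Qed.

Definition Ee {G X} {A : action G X} {Y pV pE} (C : @choiceC G X A Y pV pE)
  (a : sE Y) (g : G) : sE X := actE A (gmul g (ch C a)) (cbarE C a).

Lemma cbar_st {G X} {A : action G X} {Y pV pE} (C : @choiceC G X A Y pV pE) a :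
  st X (cbarE C a) = actV A (ginv (ch C a)) (cbarV C (st Y a)).
Proof. rewrite <- (ch_t C a), actV_K. reflexivity. Qed.

Lemma E1 {G X} {A : action G X} {Y pV pE} (C : @choiceC G X A Y pV pE) a g :
  locC C (st Y a) g -> st X (Ee C a g) = cbarV C (st Y a).
Proof.
  unfold locC, Ee. intro H. rewrite act_st, actVM, (ch_t C a). exact H.
Qed.

Lemma E2 {G X} {A : action G X} {Y pV pE} (hY : is_quotient A pV pE)
  (C : @choiceC G X A Y pV pE) a g : pE (Ee C a g) = a.
Proof. unfold Ee. rewrite (quot_E hY). apply cbarE_lift. Qed.

Lemma E3a {G X} {A : action G X} {Y pV pE} (C : @choiceC G X A Y pV pE) a g h :
  locC C (si Y a) h -> Ee C a (gmul g (psiC C a h)) = Ee C a g.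
Proof.
  unfold locC, Ee, psiC. intro H.
  assert (E : gmul (gmul g (gmul (gmul (ch C a) h) (ginv (ch C a)))) (ch C a)
              = gmul (gmul g (ch C a)) h) by (gnorm; reflexivity).
  rewrite E, actEM. f_equal. apply act_stab. rewrite cbarE_i. exact H.
Qed.

Lemma E3b {G X} {A : action G X} {Y pV pE} (C : @choiceC G X A Y pV pE) a g1 g2 :
  Ee C a g1 = Ee C a g2 -> exists h, locC C (si Y a) h /\ gmul g1 (psiC C a h) = g2.
Proof.
  unfold locC, Ee, psiC. intro H.
  exists (gmul (ginv (gmul g1 (ch C a))) (gmul g2 (ch C a))). split.
  - rewrite <- cbarE_i, <- act_si, actEM, <- H, actE_K. reflexivity.
  - gnorm. reflexivity.
Qed.

Lemma E4 {G X} {A : action G X} {Y pV pE} (hY : is_quotient A pV pE)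
  (C : @choiceC G X A Y pV pE) s e :
  st X e = cbarV C s ->
  exists g, locC C s g /\ Ee C (pE e) g = e /\ st Y (pE e) = s.
Proof.
  intro He.
  assert (Hs : st Y (pE e) = s).
  { rewrite (quot_st hY), He. apply cbarV_lift. }
  destruct (quot_E_orb hY (cbarE C (pE e)) e (cbarE_lift C _)) as [g0 Hg0].
  exists (gmul g0 (ginv (ch C (pE e)))). split; [|split]; auto.
  - unfold locC. rewrite actVM, <- Hs, <- cbar_st, <- act_st, Hg0, He, Hs. reflexivity.
  - unfold Ee. rewrite <- gmulA, gmulV, gmulr1. exact Hg0.
Qed.

Definition outb {X X' : scwol} (fV : sV X -> sV X') (fE : sE X -> sE X') (s : sV X) :=
    (forall a b, si X a = s -> si X b = s -> fE a = fE b -> a = b) /\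
    (forall a', si X' a' = fV s -> exists a, si X a = s /\ fE a = a').
Definition inb {X X' : scwol} (fV : sV X -> sV X') (fE : sE X -> sE X') (s : sV X) :=
    (forall a b, st X a = s -> st X b = s -> fE a = fE b -> a = b) /\
    (forall a', st X' a' = fV s -> exists a, st X a = s /\ fE a = a').

Lemma transfer_out {G G' X X'} (A : action G X) (A' : action G' X') (Lam : G -> G')
  (hLam : group_hom Lam) LV LE (hL : is_morphism LV LE)
  (hV : forall g v, LV (actV A g v) = actV A' (Lam g) (LV v))
  (hE : forall g a, LE (actE A g a) = actE A' (Lam g) (LE a)) v g :
  outb LV LE v -> outb LV LE (actV A g v).
Proof.
  intros [Hi Hs]. split.
  - intros a b Ha Hb Hab. apply (actE_inj A (ginv g)). apply Hi.
    + rewrite act_si, Ha, actV_K; reflexivity.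
    + rewrite act_si, Hb, actV_K; reflexivity.
    + rewrite !hE, Hab; reflexivity.
  - intros a' Ha'. destruct (Hs (actE A' (ginv (Lam g)) a')) as [a0 [H1 H2]].
    + rewrite act_si, Ha', hV, actV_K; reflexivity.
    + exists (actE A g a0). split.
      * rewrite act_si, H1; reflexivity.
      * rewrite hE, H2, actE_VK; reflexivity.
Qed.

Lemma transfer_in {G G' X X'} (A : action G X) (A' : action G' X') (Lam : G -> G')
  (hLam : group_hom Lam) LV LE (hL : is_morphism LV LE)
  (hV : forall g v, LV (actV A g v) = actV A' (Lam g) (LV v))
  (hE : forall g a, LE (actE A g a) = actE A' (Lam g) (LE a)) v g :
  inb LV LE v -> inb LV LE (actV A g v).
Proof.
  intros [Hi Hs]. split.
  - intros a b Ha Hb Hab. apply (actE_inj A (ginv g)). apply Hi.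
    + rewrite act_st, Ha, actV_K; reflexivity.
    + rewrite act_st, Hb, actV_K; reflexivity.
    + rewrite !hE, Hab; reflexivity.
  - intros a' Ha'. destruct (Hs (actE A' (ginv (Lam g)) a')) as [a0 [H1 H2]].
    + rewrite act_st, Ha', hV, actV_K; reflexivity.
    + exists (actE A g a0). split.
      * rewrite act_st, H1; reflexivity.
      * rewrite hE, H2, actE_VK; reflexivity.
Qed.

Theorem mainTheorem9
  (G G' : Grp) (X X' Y Y' : scwol)
  (A : action G X) (A' : action G' X')
  (hX : simply_connected X) (hX' : simply_connected X')
  (pV : sV X -> sV Y) (pE : sE X -> sE Y)
  (hY : is_quotient A pV pE)
  (pV' : sV X' -> sV Y') (pE' : sE X' -> sE Y')
  (hY' : is_quotient A' pV' pE')
  (Lam : G -> G') (hLam : group_hom Lam)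
  (LV : sV X -> sV X') (LE : sE X -> sE X')
  (hL : is_morphism LV LE)
  (hLeqV : forall g v, LV (actV A g v) = actV A' (Lam g) (LV v))
  (hLeqE : forall g a, LE (actE A g a) = actE A' (Lam g) (LE a))
  (lV : sV Y -> sV Y') (lE : sE Y -> sE Y')
  (hlV : forall v, lV (pV v) = pV' (LV v))
  (hlE : forall a, lE (pE a) = pE' (LE a))
  (C : choiceC A pV pE) (C' : choiceC A' pV' pE')
  (k : sV Y -> G') (hN : choiceN C C' LV lV k) :
  is_covering lV lE (locC C) (psiC C) (locC C') (psiC C')
    (lambdaV Lam k) (lambdaE C C' Lam lE k)
  <-> (injective_map Lam /\ is_isomorphism LV LE).
Proof.
  assert (hL1 := hom_one hLam).
  destruct hL as [hLi [hLt hLc]].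
  assert (lsi : forall e, si Y' (lE e) = lV (si Y e)).
  { intro e. destruct (proj1 (proj2 (proj2 hY)) e) as [x <-].
    rewrite hlE, (quot_si hY'), hLi, <- hlV, (quot_si hY). reflexivity. }
  assert (lst : forall e, st Y' (lE e) = lV (st Y e)).
  { intro e. destruct (proj1 (proj2 (proj2 hY)) e) as [x <-].
    rewrite hlE, (quot_st hY'), hLt, <- hlV, (quot_st hY). reflexivity. }
  assert (KeyK : forall a, actE A' (k (si Y a)) (LE (cbarE C a)) = cbarE C' (lE a)).
  { intro a.
    destruct (quot_E_orb hY' (actE A' (k (si Y a)) (LE (cbarE C a))) (cbarE C' (lE a)))
      as [g Hg].
    { rewrite (quot_E hY'), <- hlE, !cbarE_lift. reflexivity. }
    apply (orbit_si A' g); auto.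
    rewrite act_si, hLi, cbarE_i, hN, cbarE_i, lsi. reflexivity. }
  assert (Key : forall a g, actE A' (k (st Y a)) (LE (Ee C a g)) =
      Ee C' (lE a) (gmul (lambdaV Lam k (st Y a) g) (lambdaE C C' Lam lE k a))).
  { intros a g. unfold Ee, lambdaV, lambdaE.
    rewrite <- (KeyK a), hLeqE, <- !actEM. f_equal.
    rewrite !hLam. gnorm. reflexivity. }
  assert (trO : (forall s, outb LV LE (cbarV C s)) -> nondegenerate LV LE).
  { intros H v. destruct (quot_V_orb hY (cbarV C (pV v)) v (cbarV_lift C _)) as [g <-].
    apply (transfer_out A A' hLam (conj hLi (conj hLt hLc)) hLeqV hLeqE). apply H. }
  assert (trI : (forall s, inb LV LE (cbarV C s)) -> in_nondeg LV LE).
  { intros H v. destruct (quot_V_orb hY (cbarV C (pV v)) v (cbarV_lift C _)) as [g <-].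
    apply (transfer_in A A' hLam (conj hLi (conj hLt hLc)) hLeqV hLeqE). apply H. }
  assert (F1a : nondegenerate lV lE -> forall s, outb LV LE (cbarV C s)).
  { intros Hnd s. split.
    - intros a b Ha Hb Hab.
      destruct (quot_E_orb hY a b) as [g Hg].
      { apply (proj1 (Hnd s)).
        - rewrite (quot_si hY), Ha. apply cbarV_lift.
        - rewrite (quot_si hY), Hb. apply cbarV_lift.
        - rewrite !hlE, Hab. reflexivity. }
      apply (orbit_si A g); congruence.
    - intros a' Ha'.
      destruct (proj2 (Hnd s) (pE' a')) as [e [He1 He2]].
      { rewrite (quot_si hY'), Ha', <- hlV, cbarV_lift. reflexivity. }
      exists (cbarE C e). split.
      + rewrite cbarE_i, He1. reflexivity.
      + destruct (quot_E_orb hY' (LE (cbarE C e)) a') as [g Hg].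
        { rewrite <- hlE, cbarE_lift. exact He2. }
        apply (orbit_si A' g); auto. rewrite Ha', hLi, cbarE_i, He1. reflexivity. }
  assert (F1b : (forall s, outb LV LE (cbarV C s)) -> nondegenerate lV lE).
  { intros H s. split.
    - intros e1 e2 H1 H2 H12.
      rewrite <- (cbarE_lift C e1), <- (cbarE_lift C e2). f_equal.
      apply (proj1 (H s)).
      + rewrite cbarE_i, H1. reflexivity.
      + rewrite cbarE_i, H2. reflexivity.
      + destruct (quot_E_orb hY' (LE (cbarE C e1)) (LE (cbarE C e2))) as [g Hg].
        { rewrite <- !hlE, !cbarE_lift. exact H12. }
        apply (orbit_si A' g); auto. rewrite !hLi, !cbarE_i, H1, H2. reflexivity.
    - intros e' He'.
      destruct (proj1 (proj2 (proj2 hY')) e') as [x <-].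
      destruct (quot_V_orb hY' (si X' x) (LV (cbarV C s))) as [g Hg].
      { rewrite <- (quot_si hY'), He', <- hlV, cbarV_lift. reflexivity. }
      destruct (proj2 (H s) (actE A' g x)) as [a [Ha1 Ha2]].
      { rewrite act_si. exact Hg. }
      exists (pE a). split.
      + rewrite (quot_si hY), Ha1. apply cbarV_lift.
      + rewrite hlE, Ha2, (quot_E hY'). reflexivity. }
  assert (F2b : (forall s, inb LV LE (cbarV C s)) -> (forall (a' : sE Y') (s : sV Y), st Y' a' = lV s ->
    (forall a1 a2 g1 g2,
        lE a1 = a' -> lE a2 = a' -> st Y a1 = s -> st Y a2 = s ->
        locC C s g1 -> locC C s g2 ->
        (exists h', locC C' (si Y' a') h' /\
           gmul (gmul (lambdaV Lam k s g1) (lambdaE C C' Lam lE k a1)) (psiC C' a' h')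
           = gmul (lambdaV Lam k s g2) (lambdaE C C' Lam lE k a2)) ->
        a1 = a2 /\ exists h, locC C (si Y a1) h /\ gmul g1 (psiC C a1 h) = g2) /\
    (forall g', locC C' (lV s) g' ->
        exists a g h', lE a = a' /\ st Y a = s /\ locC C s g /\ locC C' (si Y' a') h' /\
          gmul (gmul (lambdaV Lam k s g) (lambdaE C C' Lam lE k a)) (psiC C' a' h') = g'))).
  { intros H a' s Hs. split.
    - intros a1 a2 g1 g2 Ha1 Ha2 Hs1 Hs2 Hg1 Hg2 [h' [Hh' Heq]].
      pose proof (Key a1 g1) as K1. pose proof (Key a2 g2) as K2.
      rewrite Hs1, Ha1 in K1. rewrite Hs2, Ha2 in K2.
      assert (Ee C' a' (gmul (lambdaV Lam k s g1) (lambdaE C C' Lam lE k a1))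
            = Ee C' a' (gmul (lambdaV Lam k s g2) (lambdaE C C' Lam lE k a2))) as E12.
      { rewrite <- Heq, E3a; auto. }
      rewrite <- K1, <- K2 in E12. apply actE_inj in E12.
      assert (Hee : Ee C a1 g1 = Ee C a2 g2).
      { apply (proj1 (H s)); auto.
        - rewrite E1; rewrite Hs1; auto.
        - rewrite E1; rewrite Hs2; auto. }
      assert (a1 = a2).
      { rewrite <- (E2 hY C a1 g1), <- (E2 hY C a2 g2), Hee. reflexivity. }
      subst a2. split; auto. apply E3b. exact Hee.
    - intros g' Hg'.
      assert (Hst : st X' (actE A' (ginv (k s)) (Ee C' a' g')) = LV (cbarV C s)).
      { rewrite act_st, E1, Hs, <- hN, actV_K; auto. rewrite Hs; auto. }
      destruct (proj2 (H s) _ Hst) as [e [He1 He2]].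
      destruct (E4 hY C s e He1) as [g [Hg [Hge Hse]]].
      assert (Hla : lE (pE e) = a').
      { rewrite hlE, He2, (quot_E hY'). apply (E2 hY'). }
      pose proof (Key (pE e) g) as K. rewrite Hge, Hse, Hla, He2, actE_VK in K.
      destruct (E3b C' a' _ _ (eq_sym K)) as [h' [Hh' Hh'2]].
      exists (pE e), g, h'. repeat split; auto. }
  assert (F2a : (forall (a' : sE Y') (s : sV Y), st Y' a' = lV s ->
    (forall a1 a2 g1 g2,
        lE a1 = a' -> lE a2 = a' -> st Y a1 = s -> st Y a2 = s ->
        locC C s g1 -> locC C s g2 ->
        (exists h', locC C' (si Y' a') h' /\
           gmul (gmul (lambdaV Lam k s g1) (lambdaE C C' Lam lE k a1)) (psiC C' a' h')
           = gmul (lambdaV Lam k s g2) (lambdaE C C' Lam lE k a2)) ->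
        a1 = a2 /\ exists h, locC C (si Y a1) h /\ gmul g1 (psiC C a1 h) = g2) /\
    (forall g', locC C' (lV s) g' ->
        exists a g h', lE a = a' /\ st Y a = s /\ locC C s g /\ locC C' (si Y' a') h' /\
          gmul (gmul (lambdaV Lam k s g) (lambdaE C C' Lam lE k a)) (psiC C' a' h') = g')) -> forall s, inb LV LE (cbarV C s)).
  { intros Hcov s. split.
    - intros e1 e2 H1 H2 H12.
      destruct (E4 hY C s e1 H1) as [g1 [Hg1 [Hge1 Hs1]]].
      destruct (E4 hY C s e2 H2) as [g2 [Hg2 [Hge2 Hs2]]].
      assert (Hl2 : lE (pE e2) = lE (pE e1)) by (rewrite !hlE, H12; reflexivity).
      assert (Hsa : st Y' (lE (pE e1)) = lV s) by (rewrite lst, Hs1; reflexivity).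
      pose proof (Key (pE e1) g1) as K1. pose proof (Key (pE e2) g2) as K2.
      rewrite Hge1, Hs1 in K1. rewrite Hge2, Hs2, Hl2, <- H12, K1 in K2.
      destruct (E3b C' _ _ _ K2) as [h' [Hh' Hh'2]].
      destruct (proj1 (Hcov _ s Hsa) (pE e1) (pE e2) g1 g2) as [Ha [h [Hh Hh2]]]; auto.
      { exists h'. split; auto. }
      rewrite <- Hge1, <- Hge2, <- Ha, <- Hh2, E3a; auto.
    - intros e' He'.
      assert (Hf : st X' (actE A' (k s) e') = cbarV C' (lV s)).
      { rewrite act_st, He'. apply hN. }
      destruct (E4 hY' C' (lV s) _ Hf) as [g' [Hg' [Hge' Hs']]].
      destruct (proj2 (Hcov _ s Hs') g' Hg') as [a [g [h' [Ha [Has [Hg [Hh' Heq]]]]]]].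
      exists (Ee C a g). split.
      + rewrite E1; rewrite Has; auto.
      + apply (actE_inj A' (k s)). rewrite <- Has at 1. rewrite Key, Has, Ha.
        rewrite <- (E3a _ (gmul (lambdaV Lam k s g) (lambdaE C C' Lam lE k a)) Hh'), Heq, Hge'. reflexivity. }
  split.
  - intros [Hnd [Hconn [Hloc Hcov]]].
    assert (oL : nondegenerate LV LE) by (apply trO, F1a, Hnd).
    assert (iL : in_nondeg LV LE) by (apply trI, F2a, Hcov).
    assert (Hiso : is_isomorphism LV LE).
    { apply (cover_iso (conj hLi (conj hLt hLc)) oL iL (proj1 hX) hX'). }
    split; auto.
    destruct Hiso as [_ [gV [gE [_ [gV1 _]]]]].
    destruct hX as [[[v0] _] _].
    intros x y Hxy.
    set (c := cbarV C (pV v0)).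
    assert (Hc : actV A x c = actV A y c).
    { rewrite <- (gV1 (actV A x c)), <- (gV1 (actV A y c)), !hLeqV, Hxy. reflexivity. }
    assert (Hz : gmul (ginv y) x = gone).
    { apply (Hloc (pV v0)).
      - unfold locC. fold c. rewrite actVM, Hc, actV_K. reflexivity.
      - unfold locC. apply actV1.
      - unfold lambdaV. f_equal. f_equal.
        rewrite hLam, (hom_inv hLam), Hxy, gmulV, hL1. reflexivity. }
    rewrite <- (mulVKg y x), Hz, gmulr1. reflexivity.
  - intros [HLam [_ [gV [gE [[hgi [hgt _]] [gV1 [gV2 [gE1 gE2]]]]]]]].
    assert (oL : forall v, outb LV LE v).
    { intro v. split.
      - intros a b _ _ E. rewrite <- (gE1 a), <- (gE1 b), E. reflexivity.
      - intros a' Ha'. exists (gE a'). split; auto. rewrite hgi, Ha', gV1. reflexivity. }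
    assert (iL : forall v, inb LV LE v).
    { intro v. split.
      - intros a b _ _ E. rewrite <- (gE1 a), <- (gE1 b), E. reflexivity.
      - intros a' Ha'. exists (gE a'). split; auto. rewrite hgt, Ha', gV1. reflexivity. }
    split; [|split; [|split]].
    + apply F1b. intro s; apply oL.
    + destruct hX' as [[[v0] hc] _]. split; [constructor; exact (pV' v0)|].
      intros v w.
      destruct (proj1 (proj2 hY') v) as [x <-].
      destruct (proj1 (proj2 hY') w) as [y <-].
      destruct (hc x y) as [p Hp].
      exists (mapP pE' p). apply (map_path (proj1 hY')). exact Hp.
    + intros s g1 g2 _ _ E. apply HLam. unfold lambdaV in E.
      apply mul_cancel_l with (x := k s).
      pose proof (f_equal (fun z => gmul z (k s)) E) as E'. simpl in E'.
      rewrite <- !gmulA, !gmulV, !gmulr1 in E'. exact E'.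
    + apply F2b. intro s; apply iL.
Qed.
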